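(* For every $\theta\in\mathbb{R}$, integer $m\ge1$, $x=x_1\cdots x_m\in\{0,1\}^m$ and one-qubit state $|\psi\rangle$, $$\langle x|_{1\ldots m}\,(M_{m,\theta}^\dagger)_{1\ldots m}\prod_{i=1}^m\mathrm{CNOT}_{i,m+1}\,|+\rangle^{\otimes m}\otimes|\psi\rangle=\langle x|_{1\ldots m}\prod_{i=1}^m(A_\theta^\dagger)_i\,\mathrm{CNOT}_{i,m+1}\,|+\rangle^{\otimes m}\otimes|\psi\rangle .$$
   Context: $X$ is the Pauli-$X$ matrix, $|+\rangle=(|0\rangle+|1\rangle)/\sqrt2$, $\mathrm{CNOT}_{i,j}$ has control $i$ and target $j$, and $\langle x|_{1\ldots m}$ is the partial inner product on qubits $1,\dots,m$. $A_\theta=|0\rangle\langle0|+e^{-i\theta X}|1\rangle\langle1|$. $M_{m,\theta}$ is the (non-unitary) $m$-qubit operator defined on basis states by $M_{m,\theta}|x_1\cdots x_m\rangle=\bigotimes_{j=1}^m e^{-i\theta x_{j-1}X}|x_j\rangle$, with indices mod $m$ (so $x_0=x_m$). *)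

(* Defs.v *)
From HB Require Import structures.
From mathcomp Require Import all_boot all_order all_algebra.
From mathcomp Require Import complex.
From mathcomp Require Import reals trigo.
Set Implicit Arguments. Unset Strict Implicit. Unset Printing Implicit Defensive.
Import Order.TTheory GRing.Theory Num.Theory.
Local Open Scope ring_scope.
Local Open Scope complex_scope.

Section Qubits.
Variable R : realType.
Local Notation C := (complex R).

Definition basis (n : nat) := {ffun 'I_n -> bool}.
(* vectors of (C^2)^{⊗n}, as amplitude functions on basis strings *)
Definition qstate (n : nat) := basis n -> C.
(* (possibly non-unitary) operators on n qubits, as matrices indexed by basis strings:
   op A b c = <b| A |c> *)
Definition qop (n : nat) := basis n -> basis n -> C.
Definition qstate1 := bool -> C.
Definition qop1 := bool -> bool -> C.

Definition b2C (b : bool) : C := (b%:R)%R.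

Definition apply n (A : qop n) (v : qstate n) : qstate n :=
  fun b => \sum_(c : basis n) A b c * v c.
Definition opmul n (A B : qop n) : qop n :=
  fun b c => \sum_(d : basis n) A b d * B d c.
Definition opid n : qop n := fun b c => b2C (b == c).
Definition opprod n (s : seq (qop n)) : qop n := foldr (@opmul n) (@opid n) s.
Definition qadj n (A : qop n) : qop n := fun b c => (A c b)^*.
Definition qadj1 (A : qop1) : qop1 := fun b c => (A c b)^*.

(* Pauli X and e^{-i t X} = cos t I - i sin t X *)
Definition pauliX : qop1 := fun b c => b2C (b != c).
Definition expX (t : R) : qop1 :=
  fun b c => (cos t)%:C * b2C (b == c) - 'i * (sin t)%:C * pauliX b c.
(* A_theta = |0><0| + e^{-i theta X} |1><1| *)
Definition Atheta (theta : R) : qop1 :=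
  fun b c => if c then expX theta b true else b2C (b == false).

Definition on_qubit n (k : 'I_n) (U : qop1) : qop n :=
  fun b c => U (b k) (c k) * b2C [forall j, (j != k) ==> (b j == c j)].

Definition cnot_map n (i t : 'I_n) (c : basis n) : basis n :=
  [ffun j => if j == t then c t (+) c i else c j].
Definition CNOT n (i t : 'I_n) : qop n := fun b c => b2C (b == cnot_map i t c).

(* M_{m,theta} |x_1..x_m> = ⊗_j e^{-i theta x_{j-1} X} |x_j>, indices mod m *)
Definition Mop m (theta : R) : qop m :=
  fun b c => \prod_(j : 'I_m) expX (theta * ((c (ord_pred j))%:R : R)) (b j) (c j).

(* qubits 1..m are indices 0..m-1 of 'I_m.+1; qubit m+1 is ord_max *)
Definition init_part m (b : basis m.+1) : basis m :=
  [ffun j : 'I_m => b (widen_ord (leqnSn m) j)].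
Definition join_last m (x : basis m) (t : bool) : basis m.+1 :=
  [ffun j : 'I_m.+1 => if unlift ord_max j is Some k then x k else t].

Definition on_first m (A : qop m) : qop m.+1 :=
  fun b c => A (init_part b) (init_part c) * b2C (b ord_max == c ord_max).

Definition plus_tensor m (psi : qstate1) : qstate m.+1 :=
  fun b => ((Num.sqrt (2 : R))^-1 ^+ m)%:C * psi (b ord_max).

Definition partial_bra m (x : basis m) (Phi : qstate m.+1) : qstate1 :=
  fun t => Phi (join_last x t).

Definition qb m (i : 'I_m) : 'I_m.+1 := widen_ord (leqnSn m) i.

End Qubits.

Arguments apply {R n}.
Arguments opmul {R n}.
Arguments opid {R n}.
Arguments opprod {R n}.
Arguments qadj {R n}.
Arguments qadj1 {R}.
Arguments pauliX {R}.
Arguments on_qubit {R n}.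
Arguments CNOT {R n}.
Arguments on_first {R m}.
Arguments partial_bra {R m}.

(* Main.v *)
Require Import Defs.
From HB Require Import structures.
From mathcomp Require Import all_boot all_order all_algebra.
From mathcomp Require Import complex.
From mathcomp Require Import reals trigo.
From mathcomp Require Import ring.
From Stdlib Require Import FunctionalExtensionality.
Set Implicit Arguments. Unset Strict Implicit.
Import Order.TTheory GRing.Theory Num.Theory.
Local Open Scope ring_scope.
Local Open Scope complex_scope.

Section Helpers.
Variable R : realType.
Local Notation C := (complex R).

Lemma b2C1 : b2C R true = 1. Proof. by []. Qed.
Lemma b2C0 : b2C R false = 0. Proof. by []. Qed.
Lemma b2C_and a b : b2C R (a && b) = b2C R a * b2C R b.
Proof. by case: a; case: b; rewrite /= ?b2C1 ?b2C0 ?mulr1 ?mulr0. Qed.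

Lemma sum_b2C_eq n (d : basis n) (F : basis n -> C) :
  \sum_(c : basis n) b2C R (c == d) * F c = F d.
Proof.
rewrite (bigD1 d) //= eqxx b2C1 mul1r big1 ?addr0 // => c /negbTE ->.
by rewrite b2C0 mul0r.
Qed.

Lemma apply_opmul n (A B : qop R n) v : apply (opmul A B) v = apply A (apply B v).
Proof.
apply: functional_extensionality => b; rewrite /apply /opmul.
under eq_bigr do rewrite big_distrl.
rewrite exchange_big; apply: eq_bigr => d _; rewrite big_distrr.
by apply: eq_bigr => c _; exact/esym/mulrA.
Qed.

Lemma apply_opid n (v : qstate R n) : apply opid v = v.
Proof.
apply: functional_extensionality => b; rewrite /apply /opid.
under eq_bigr do rewrite eq_sym.
by rewrite sum_b2C_eq.
Qed.

Lemma apply_cons n (A : qop R n) s v :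
  apply (opprod (A :: s)) v = apply A (apply (opprod s) v).
Proof. by rewrite /= apply_opmul. Qed.

Lemma cnot_inv n (i t : 'I_n) : i != t -> involutive (cnot_map i t).
Proof.
move=> it c; apply/ffunP => k; rewrite !ffunE.
case: (k =P t) => [->|//]; rewrite eqxx (negbTE it).
by rewrite -addbA addbb addbF. Qed.

Lemma apply_CNOT n (i t : 'I_n) (v : qstate R n) b : i != t ->
  apply (CNOT i t) v b = v (cnot_map i t b).
Proof.
move=> it; rewrite /apply /CNOT.
under eq_bigr do rewrite eq_sym (inv_eq (@cnot_inv _ _ _ it)).
by rewrite sum_b2C_eq.
Qed.

Definition setq n (b : basis n) (k : 'I_n) (e : bool) : basis n :=
  [ffun j => if j == k then e else b j].

Lemma forall_setq n (b c : basis n) k :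
  [forall j, (j != k) ==> (b j == c j)] = (c == setq b k (c k)).
Proof.
apply/forallP/eqP => [H|E j].
  apply/ffunP => j; rewrite ffunE; case: (j =P k) => [->//|/eqP ne].
  by move: (H j); rewrite ne /= => /eqP.
apply/implyP => ne; by rewrite E ffunE (negbTE ne).
Qed.

Lemma eq_setq n (b c : basis n) k e :
  (c == setq b k e) = (c == setq b k (c k)) && (c k == e).
Proof.
case: (c k =P e) => [<-|ne]; rewrite ?andbT ?andbF //.
by apply/eqP => E; apply: ne; rewrite E ffunE eqxx.
Qed.

Lemma apply_on_qubit n (k : 'I_n) (U : qop1 R) (v : qstate R n) b :
  apply (on_qubit k U) v b = \sum_(e : bool) U (b k) e * v (setq b k e).
Proof.
rewrite /apply /on_qubit.
transitivity (\sum_(c : basis n) \sum_(e : bool)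
   b2C R (c == setq b k e) * (U (b k) e * v (setq b k e))).
  apply: eq_bigr => c _; rewrite forall_setq.
  under eq_bigr do rewrite eq_setq b2C_and.
  rewrite big_bool /=.
  case ck: (c k); case: eqP => E; rewrite /= ?b2C1 ?b2C0 ?mul0r ?mul1r ?mulr0 ?add0r ?addr0 //; by rewrite ?mulr1 ?mul0r ?addr0 ?add0r -?E.

rewrite exchange_big; apply: eq_bigr => e _.
by rewrite sum_b2C_eq.
Qed.


Lemma comm_onq_cnot n (k i t : 'I_n) (U : qop1 R) (w : qstate R n) :
  k != t -> k != i -> i != t ->
  apply (CNOT i t) (apply (on_qubit k U) w) = apply (on_qubit k U) (apply (CNOT i t) w).
Proof.
move=> kt ki it; apply: functional_extensionality => b.
rewrite apply_CNOT // !apply_on_qubit; apply: eq_bigr => e _.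
rewrite apply_CNOT //.
have -> : cnot_map i t b k = b k by rewrite ffunE (negbTE kt).
congr (_ * w _); apply/ffunP => j; rewrite !ffunE.
have tk : (t == k) = false by rewrite eq_sym (negbTE kt).
have ik : (i == k) = false by rewrite eq_sym (negbTE ki).
rewrite tk ik; case: (j =P k) => [->|//]; by rewrite (negbTE kt).
Qed.

Lemma comm_list n m (Aop : 'I_m -> qop R n) (C0 : qop R n) s w :
  (forall j, j \in s -> forall w, apply C0 (apply (Aop j) w) = apply (Aop j) (apply C0 w)) ->
  apply C0 (apply (opprod (map Aop s)) w) = apply (opprod (map Aop s)) (apply C0 w).
Proof.
elim: s w => [|j s IH] w H /=; first by rewrite !apply_opid.
rewrite !apply_opmul H ?mem_head // IH // => j' js.
by apply: H; rewrite in_cons js orbT.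
Qed.

Lemma split_list n m (Aop Cop : 'I_m -> qop R n) s w : uniq s ->
  (forall i j, i != j -> forall w, apply (Cop i) (apply (Aop j) w) = apply (Aop j) (apply (Cop i) w)) ->
  apply (opprod [seq opmul (Aop i) (Cop i) | i <- s]) w =
  apply (opprod (map Aop s)) (apply (opprod (map Cop s)) w).
Proof.
elim: s w => [|i s IH] w /=; first by rewrite !apply_opid.
case/andP => iNs us H.
rewrite !apply_opmul IH // comm_list // => j js; apply: H.
by apply: contraNneq iNs => ->.
Qed.

Lemma qb_neq m (i : 'I_m) : qb i != ord_max.
Proof. by rewrite -val_eqE /= neq_ltn ltn_ord. Qed.

Lemma qb_inj m : injective (@qb m).
Proof. by move=> i j /(congr1 val) /= /val_inj. Qed.

Lemma lift_qb m (i : 'I_m) : lift ord_max i = qb i.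
Proof. by apply: val_inj; exact: lift_max. Qed.

Lemma cnots_apply m (s : seq 'I_m) (phi : bool -> C) :
  apply (opprod [seq CNOT (qb i) ord_max | i <- s]) (fun b : basis m.+1 => phi (b ord_max))
  = fun b => phi (b ord_max (+) \big[addb/false]_(i <- s) b (qb i)).
Proof.
elim: s => [|i s IH] /=.
  by rewrite apply_opid; apply: functional_extensionality => b; rewrite big_nil addbF.
rewrite apply_opmul IH; apply: functional_extensionality => b.
rewrite apply_CNOT ?qb_neq // big_cons ffunE eqxx addbA; congr (phi (_ (+) _)).
by apply: eq_bigr => j _; rewrite ffunE (negbTE (qb_neq j)).
Qed.

Lemma forall_cons n (b c : basis n) k s e : k \notin s ->
  [forall j, (j \notin s) ==> (c j == setq b k e j)] =
  (c k == e) && [forall j, (j \notin k :: s) ==> (c j == b j)].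
Proof.
move=> ks; apply/forallP/andP => [H|[/eqP ck /forallP H] j].
  split; first by move: (H k); rewrite ks /= ffunE eqxx.
  apply/forallP => j; apply/implyP; rewrite in_cons negb_or => /andP[jk js].
  by move: (H j); rewrite js ffunE (negbTE jk).
apply/implyP => js; rewrite ffunE; case: (j =P k) => [->|/eqP jk]; first by rewrite ck.
by move: (H j); rewrite in_cons (negbTE jk) js.
Qed.

Lemma onq_list n (U : qop1 R) (s : seq 'I_n) (w : qstate R n) b : uniq s ->
  apply (opprod [seq on_qubit k U | k <- s]) w b =
  \sum_(c : basis n) b2C R [forall j, (j \notin s) ==> (c j == b j)]
       * (\prod_(k <- s) U (b k) (c k)) * w c.
Proof.
elim: s w b => [|k s IH] w b /=.
  move=> _; rewrite apply_opid.
  have E : forall c : basis n, [forall j, (j \notin [::]) ==> (c j == b j)] = (c == b).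
    move=> c; apply/forallP/eqP => [H|-> j]; last by rewrite eqxx implybT.
    by apply/ffunP => j; apply/eqP; move: (H j); rewrite in_nil.
  under eq_bigr do rewrite E big_nil mulr1.
  by rewrite sum_b2C_eq.
case/andP => ks us.
rewrite apply_opmul apply_on_qubit.
transitivity (\sum_(e : bool) \sum_(c : basis n) U (b k) e * (b2C R (c k == e) *
   (b2C R [forall j, (j \notin k :: s) ==> (c j == b j)] * (\prod_(l <- s) U (b l) (c l)) * w c))).
  apply: eq_bigr => e _; rewrite IH // big_distrr; apply: eq_bigr => c _ /=.
  rewrite forall_cons // b2C_and.
  have -> : \prod_(l <- s) U (setq b k e l) (c l) = \prod_(l <- s) U (b l) (c l).
    apply: eq_big_seq => l ls; rewrite ffunE.
    suff -> : (l == k) = false by [].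
    by apply/negbTE; apply: contraNneq ks => <-.
  ring.
rewrite exchange_big; apply: eq_bigr => c _ /=.
rewrite big_bool /= big_cons; case: (c k); rewrite /= ?b2C1 ?b2C0; ring.
Qed.


Lemma conji : ('i : C)^* = - 'i.
Proof. by apply/eqP; rewrite eq_complex /= oppr0 !eqxx. Qed.

Definition sg (s : C) (b : bool) : C := if b then s else 1.

Lemma expX_conj t b c : (expX t b c)^* = (cos t)%:C * b2C R (b == c) + 'i * (sin t)%:C * pauliX b c.
Proof. by case: b; case: c; rewrite /expX/pauliX/b2C/=; simpc. Qed.

Lemma conjE (z : C) : Num.conj z = conjc z.
Proof. by []. Qed.

Lemma fac1 (th : R) (s : C) (a c : bool) : s = 1 \/ s = -1 ->
  conjc (expX (th * ((a : nat)%:R : R)) true c) * s + conjc (expX (th * ((a : nat)%:R : R)) false c)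
  = sg s c * sg ((cos th)%:C + 'i * (sin th)%:C * s) a.
Proof.
case=> ->; case: a; case: c;
  rewrite !expX_conj /pauliX /sg /= ?mulr0 ?mulr1 ?cos0 ?sin0; simpc. all: try by [].
Qed.

Lemma fac2 (th : R) (s : C) (c : bool) : s = 1 \/ s = -1 ->
  conjc (Atheta th true c) * s + conjc (Atheta th false c)
  = sg (s * ((cos th)%:C + 'i * (sin th)%:C * s)) c.
Proof.
case=> ->; case: c;
  rewrite /Atheta ?expX_conj /pauliX /sg /b2C /=; simpc. all: try by [].
Qed.

Lemma sg_morph : {morph sg (-1) : x y / x (+) y >-> x * y}.
Proof. by move=> x y; case: x; case: y; rewrite /sg /= ?mulrNN ?mulr1 ?mul1r. Qed.

Lemma core m (K1 K2 : basis m -> C) (k : C) (psi : bool -> C) t :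
  (forall s : C, s = 1 \/ s = -1 ->
     \sum_(d : basis m) K1 d * \prod_(i : 'I_m) sg s (d i)
   = \sum_(d : basis m) K2 d * \prod_(i : 'I_m) sg s (d i)) ->
  \sum_(d : basis m) K1 d * (k * psi (t (+) \big[addb/false]_(i <- enum 'I_m) d i))
  = \sum_(d : basis m) K2 d * (k * psi (t (+) \big[addb/false]_(i <- enum 'I_m) d i)).
Proof.
move=> H.
pose a := (psi t + psi (~~ t)) / 2.
pose bb := (psi t - psi (~~ t)) / 2.
have E : forall d : basis m, psi (t (+) \big[addb/false]_(i <- enum 'I_m) d i)
            = a + bb * \prod_(i : 'I_m) sg (-1) (d i).
  move=> d.
  have -> : \prod_(i : 'I_m) sg (-1) (d i) = sg (-1) (\big[addb/false]_(i <- enum 'I_m) d i).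
    by rewrite (big_morph (sg (-1)) sg_morph (erefl (sg (-1) false))) big_enum.
  case: (\big[addb/false]_(i <- enum 'I_m) d i); rewrite /sg ?addbT ?addbF /a /bb; by field.
have S : forall K : basis m -> C,
    \sum_(d : basis m) K d * (k * psi (t (+) \big[addb/false]_(i <- enum 'I_m) d i))
  = k * a * (\sum_(d : basis m) K d * \prod_(i : 'I_m) sg 1 (d i))
    + k * bb * (\sum_(d : basis m) K d * \prod_(i : 'I_m) sg (-1) (d i)).
  move=> K; rewrite !mulr_sumr -big_split /=; apply: eq_bigr => d _.
  have P1 : \prod_(i < m) sg 1 (d i) = 1 by apply: big1 => i _; case: (d i).
  rewrite E P1.
  ring.
by rewrite !S (H 1 (or_introl erefl)) (H (-1) (or_intror erefl)).
Qed.

Lemma pform m (f : 'I_m -> bool -> C) s :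
  \sum_(d : basis m) (\prod_(i : 'I_m) f i (d i)) * \prod_(i : 'I_m) sg s (d i)
  = \prod_(i : 'I_m) (f i true * s + f i false).
Proof.
symmetry.
transitivity (\prod_(i : 'I_m) \sum_(e : bool) f i e * sg s e).
  by apply: eq_bigr => i _; rewrite big_bool /sg /= mulr1.
rewrite bigA_distr_bigA; apply: eq_bigr => d _.
by rewrite big_split.
Qed.

Lemma join_max m (x : basis m) t : join_last x t ord_max = t.
Proof. by rewrite ffunE unlift_none. Qed.

Lemma join_qb m (x : basis m) t i : join_last x t (qb i) = x i.
Proof. by rewrite ffunE -lift_qb liftK. Qed.

Lemma init_join m (x : basis m) t : init_part (join_last x t) = x.
Proof. by apply/ffunP => j; rewrite ffunE; exact: join_qb. Qed.

Lemma join_init m (c : basis m.+1) : join_last (init_part c) (c ord_max) = c.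
Proof.
apply/ffunP => j; rewrite ffunE; case: unliftP => [k ->|->] //.
by rewrite ffunE lift_qb.
Qed.

Lemma sum_last m t (F : basis m.+1 -> C) :
  \sum_(c : basis m.+1) b2C R (c ord_max == t) * F c = \sum_(d : basis m) F (join_last d t).
Proof.
rewrite (reindex (fun p : basis m * bool => join_last p.1 p.2)) /=; last first.
  apply: onW_bij; exists (fun c => (init_part c, c ord_max)) => [[d e]|c] /=.
    by rewrite init_join join_max.
  by rewrite join_init.
rewrite -(pair_big xpredT xpredT (fun d e => b2C R (join_last d e ord_max == t) * F (join_last d e))) /=.
apply: eq_bigr => d _; rewrite big_bool /= !join_max.
by case: t; rewrite /= ?b2C1 ?b2C0 ?mul1r ?mul0r ?addr0 ?add0r.
Qed.

Lemma notin_qb m (j : 'I_m.+1) : (j \notin [seq qb i | i <- enum 'I_m]) = (j == ord_max).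
Proof.
case: (unliftP ord_max j) => [k ->|->].
  by rewrite lift_qb (negbTE (qb_neq k)) map_f ?mem_enum.
rewrite eqxx; apply/mapP => -[i _ /eqP]; by rewrite eq_sym (negbTE (qb_neq i)).
Qed.

End Helpers.


Lemma prod_pred (R : realType) m (G : 'I_m -> complex R) :
  \prod_(j : 'I_m) G (ord_pred j) = \prod_(j : 'I_m) G j.
Proof. by symmetry; exact: (reindex_inj (@ord_pred_inj m)). Qed.

Unset Implicit Arguments.
Theorem lemma4p4 (R : realType) (theta : R) (m : nat) (hm : (1 <= m)%N)
  (x : basis m) (psi : qstate1 R)
  (hpsi : `|psi false| ^+ 2 + `|psi true| ^+ 2 = 1) :
  partial_bra x
    (apply (opprod (on_first (qadj (@Mop R m theta))
                    :: [seq CNOT (qb i) ord_max | i <- enum 'I_m]))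
           (@plus_tensor R m psi))
  =
  partial_bra x
    (apply (opprod [seq opmul (on_qubit (qb i) (qadj1 (@Atheta R theta)))
                              (CNOT (qb i) ord_max) | i <- enum 'I_m])
           (@plus_tensor R m psi)).
Proof.
apply: functional_extensionality => t.
rewrite /partial_bra apply_cons.
set k := ((Num.sqrt (2:R))^-1 ^+ m)%:C.
have PT : plus_tensor psi = (fun b : basis m.+1 => (fun u => k * psi u) (b ord_max)) by [].
rewrite (split_list (Aop := fun i => on_qubit (qb i) (qadj1 (Atheta theta)))
                    (Cop := fun i => CNOT (qb i) ord_max)); first last.
- move=> i j ij w; apply: comm_onq_cnot; first exact: qb_neq.
    by rewrite (inj_eq (@qb_inj m)) eq_sym.
  exact: qb_neq.
- exact: enum_uniq.
rewrite PT (cnots_apply (enum 'I_m) (fun u => k * psi u)).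
have -> : [seq on_qubit (qb i) (qadj1 (Atheta theta)) | i <- enum 'I_m]
   = [seq on_qubit k0 (qadj1 (Atheta theta)) | k0 <- [seq qb i | i <- enum 'I_m]]
  by rewrite -map_comp.
rewrite onq_list; last by rewrite map_inj_uniq ?enum_uniq //; exact: (@qb_inj m).
transitivity (\sum_(d : basis m)
   (\prod_(j : 'I_m) conjc (expX (theta * ((x (ord_pred j) : nat)%:R : R)) (d j) (x j)))
   * (k * psi (t (+) \big[addb/false]_(i <- enum 'I_m) d i))).
  rewrite /apply /on_first init_join join_max.
  transitivity (\sum_(c : basis m.+1) b2C R (c ord_max == t) *
     ((\prod_(j : 'I_m) conjc (expX (theta * ((x (ord_pred j) : nat)%:R : R)) (init_part c j) (x j)))
      * (k * psi (c ord_max (+) \big[addb/false]_(i <- enum 'I_m) c (qb i))))).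
    apply: eq_bigr => c _; rewrite /qadj /Mop rmorph_prod eq_sym /=; ring.
  rewrite sum_last; apply: eq_bigr => d _; rewrite join_max init_join.
  congr (_ * (k * psi (t (+) _))); apply: eq_bigr => i _; exact: join_qb.
symmetry.
transitivity (\sum_(d : basis m)
   (\prod_(j : 'I_m) conjc (Atheta theta (d j) (x j)))
   * (k * psi (t (+) \big[addb/false]_(i <- enum 'I_m) d i))).
  transitivity (\sum_(c : basis m.+1) b2C R (c ord_max == t) *
     ((\prod_(j : 'I_m) conjc (Atheta theta (c (qb j)) (x j)))
      * (k * psi (c ord_max (+) \big[addb/false]_(i <- enum 'I_m) c (qb i))))).
    apply: eq_bigr => c _.
    have -> : [forall j, (j \notin [seq qb i | i <- enum 'I_m]) ==> (c j == join_last x t j)]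
              = (c ord_max == t).
      apply/forallP/idP => [H|H j]; first by move: (H ord_max); rewrite notin_qb eqxx join_max.
      by rewrite notin_qb; apply/implyP => /eqP ->; rewrite join_max.
    rewrite big_map big_enum /=.
    under eq_bigr do rewrite join_qb.
    rewrite /qadj1 mulrA; congr (_ * _ * _).
  rewrite sum_last; apply: eq_bigr => d _; rewrite join_max.
  congr (_ * (k * psi (t (+) _))).
    by apply: eq_bigr => j _; rewrite join_qb.
  by apply: eq_bigr => i _; exact: join_qb.
symmetry; apply: core => s hs.
rewrite /= (pform (fun j e => conjc (expX (theta * ((x (ord_pred j) : nat)%:R : R)) e (x j)))).
rewrite (pform (fun j e => conjc (Atheta theta e (x j)))).
under eq_bigr do rewrite fac1 //.
under [RHS]eq_bigr do rewrite fac2 //.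
rewrite big_split /= (prod_pred (fun j => sg ((cos theta)%:C + 'i * (sin theta)%:C * s) (x j))).
rewrite -big_split; apply: eq_bigr => j _; rewrite /sg; case: (x j) => //.
exact: mulr1.
Qed.
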